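(* Let $P_1$ be the uniform distribution on $J_1=[0,\frac12]$, let $P_2$ be the uniform distribution on $J_2=[\frac12,1]$, and let $P=\frac34P_1+\frac14P_2$. For $n\ge 2$, let $\alpha_n$ be an optimal set of $n$-means for $P$. Then $\alpha_n\cap J_1\neq\emptyset$ and $\alpha_n\cap J_2\neq\emptyset$.
   Context: For a finite set $\alpha\subset\mathbb R$, $V(P;\alpha)=\int\min_{a\in\alpha}(x-a)^2\,dP(x)$; $V_n=\inf\{V(P;\alpha):\mathrm{card}(\alpha)\le n\}$; an optimal set of $n$-means is a set $\alpha$ with $\mathrm{card}(\alpha)\le n$ and $V(P;\alpha)=V_n$. *)

(* Defs.v *)
From Stdlib Require Import Reals List.
From Coquelicot Require Import Coquelicot.
Import ListNotations.
Open Scope R_scope.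

(* min_{a in alpha} (x - a)^2, for a nonempty list alpha (value on [] is
   irrelevant: only nonempty sets are ever considered). *)
Definition min_sqdist (alpha : list R) (x : R) : R :=
  match alpha with
  | [] => 0
  | a :: t => fold_right (fun b m => Rmin ((x - b) ^ 2) m) ((x - a) ^ 2) t
  end.

(* P = 3/4 P1 + 1/4 P2, P1 uniform on [0,1/2] (density 2), P2 uniform on
   [1/2,1] (density 2).  V(P;alpha) = \int min_a (x-a)^2 dP(x). *)
Definition V (alpha : list R) : R :=
  3/4 * (2 * RInt (min_sqdist alpha) 0 (1/2))
  + 1/4 * (2 * RInt (min_sqdist alpha) (1/2) 1).

(* A finite set alpha of reals represented by a duplicate-free list;
   card alpha = length alpha. *)
Definition admissible (n : nat) (alpha : list R) : Prop :=
  alpha <> [] /\ NoDup alpha /\ (length alpha <= n)%nat.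

Definition Vn (n : nat) : Rbar :=
  Glb_Rbar (fun v => exists beta, admissible n beta /\ v = V beta).

Definition optimal_n_means (n : nat) (alpha : list R) : Prop :=
  admissible n alpha /\ Finite (V alpha) = Vn n.

(* Main.v *)
Require Import Defs.
From Stdlib Require Import Reals List Lra Lia Classical.
From Coquelicot Require Import Coquelicot.
Import ListNotations.
Open Scope R_scope.

Definition fold_msd (x a : R) (t : list R) :=
  fold_right (fun b m => Rmin ((x - b) ^ 2) m) ((x - a) ^ 2) t.

Lemma fold_le x a t : forall b, In b (a :: t) -> fold_msd x a t <= (x - b) ^ 2.
Proof.
  induction t as [|c t IH]; intros b Hb; unfold fold_msd in *; simpl in *.
  - destruct Hb as [->|[]]; lra.
  - destruct Hb as [->|[->|Hb]].
    + eapply Rle_trans; [apply Rmin_r|]. apply IH; simpl; auto.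
    + apply Rmin_l.
    + eapply Rle_trans; [apply Rmin_r|]. apply IH; simpl; auto.
Qed.

Lemma fold_eq x a t : exists b, In b (a :: t) /\ fold_msd x a t = (x - b) ^ 2.
Proof.
  induction t as [|c t IH]; unfold fold_msd in *; cbn [fold_right In] in *.
  - exists a; auto.
  - destruct IH as [b [Hb E]]. unfold Rmin. destruct (Rle_dec _ _).
    + exists c; auto.
    + exists b. split; [destruct Hb; auto|]. rewrite <- E. reflexivity.
Qed.

Lemma msd_le alpha x b : In b alpha -> min_sqdist alpha x <= (x - b) ^ 2.
Proof. destruct alpha as [|a t]; [intros []|]. apply fold_le. Qed.

Lemma msd_eq alpha x : alpha <> [] -> exists b, In b alpha /\ min_sqdist alpha x = (x - b) ^ 2.
Proof. destruct alpha as [|a t]; [tauto|]. intros _. apply fold_eq. Qed.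

Lemma cont_sq c x : continuous (fun y => (y - c) ^ 2) x.
Proof. apply (@ex_derive_continuous R_AbsRing R_NormedModule). auto_derive. auto. Qed.

Lemma Rmin_formula u v : Rmin u v = (u + v - Rabs (u - v)) / 2.
Proof. unfold Rmin, Rabs. destruct (Rle_dec u v); destruct (Rcase_abs (u - v)); lra. Qed.

Lemma cont_min (f g : R -> R) x : continuous f x -> continuous g x ->
  continuous (fun y => Rmin (f y) (g y)) x.
Proof.
  intros Hf Hg.
  apply continuous_ext with (f := fun y => (f y + g y - Rabs (f y - g y)) * / 2).
  { intros y. rewrite Rmin_formula. reflexivity. }
  apply continuity_pt_filterlim in Hf. apply continuity_pt_filterlim in Hg.
  apply continuity_pt_filterlim.
  apply (continuity_pt_mult (fun y => f y + g y - Rabs (f y - g y)) (fun _ => / 2)).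
  2: apply continuity_pt_const; intros ? ?; reflexivity.
  apply (continuity_pt_minus (fun y => f y + g y) (fun y => Rabs (f y - g y))).
  apply continuity_pt_plus; auto.
  apply (continuity_pt_comp (fun y => f y - g y) Rabs).
  apply continuity_pt_minus; auto. apply Rcontinuity_abs.
Qed.

Lemma msd_cont alpha x : continuous (min_sqdist alpha) x.
Proof.
  destruct alpha as [|a t]; simpl.
  - apply continuous_const.
  - induction t as [|c t IH]; simpl.
    + apply cont_sq.
    + apply cont_min; [apply cont_sq|exact IH].
Qed.

Lemma msd_ge0 alpha x : 0 <= min_sqdist alpha x.
Proof.
  destruct (list_eq_dec Req_dec_T alpha []) as [->|Hn]; [simpl; lra|].
  destruct (msd_eq alpha x Hn) as [b [_ E]]. rewrite E. apply pow2_ge_0.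
Qed.

Lemma int_sq c a b : RInt (fun x => (x - c) ^ 2) a b = ((b - c) ^ 3 - (a - c) ^ 3) / 3.
Proof.
  apply is_RInt_unique.
  assert (H : is_RInt (fun x => (x - c) ^ 2) a b
     (minus ((fun x => (x - c) ^ 3 / 3) b) ((fun x => (x - c) ^ 3 / 3) a))).
  { apply (@is_RInt_derive R_CompleteNormedModule (fun x => (x - c) ^ 3 / 3)).
    - intros x _. auto_derive; auto. field.
    - intros x _. apply cont_sq. }
  replace (((b - c) ^ 3 - (a - c) ^ 3) / 3) with
     (minus ((fun x => (x - c) ^ 3 / 3) b) ((fun x => (x - c) ^ 3 / 3) a)); auto.
  unfold minus, plus, opp; simpl. field.
Qed.

Lemma ex_msd alpha a b : ex_RInt (min_sqdist alpha) a b.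
Proof. apply (@ex_RInt_continuous R_CompleteNormedModule). intros; apply msd_cont. Qed.

Lemma ex_sq c a b : ex_RInt (fun x => (x - c) ^ 2) a b.
Proof. apply (@ex_RInt_continuous R_CompleteNormedModule). intros; apply cont_sq. Qed.

Lemma RInt_lt_piece (f g : R -> R) a p q b :
  a <= p -> p < q -> q <= b ->
  (forall x, continuous f x) -> (forall x, continuous g x) ->
  (forall x, a <= x <= b -> g x <= f x) -> (forall x, p < x < q -> g x < f x) ->
  RInt g a b < RInt f a b.
Proof.
  intros Hap Hpq Hqb cf cg Hle Hlt.
  assert (ef : forall u v, ex_RInt f u v) by (intros; apply (@ex_RInt_continuous R_CompleteNormedModule); auto).
  assert (eg : forall u v, ex_RInt g u v) by (intros; apply (@ex_RInt_continuous R_CompleteNormedModule); auto).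
  rewrite <- (RInt_Chasles f a p b), <- (RInt_Chasles g a p b) by auto.
  rewrite <- (RInt_Chasles f p q b), <- (RInt_Chasles g p q b) by auto.
  unfold plus; simpl.
  assert (RInt g a p <= RInt f a p) by (apply RInt_le; auto; intros; apply Hle; lra).
  assert (RInt g q b <= RInt f q b) by (apply RInt_le; auto; intros; apply Hle; lra).
  assert (RInt g p q < RInt f p q) by (apply RInt_lt; auto).
  lra.
Qed.

Lemma glb_le n alpha beta : optimal_n_means n alpha -> admissible n beta -> V alpha <= V beta.
Proof.
  intros [_ E] Hb. unfold Vn in E.
  destruct (Glb_Rbar_correct (fun v => exists beta, admissible n beta /\ v = V beta)) as [Hlb _].
  specialize (Hlb (V beta) (ex_intro _ beta (conj Hb eq_refl))).
  rewrite <- E in Hlb. exact Hlb.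
Qed.

Lemma NoDup_remove' (l : list R) x : NoDup l -> NoDup (remove Req_EM_T x l).
Proof.
  induction 1 as [|y l Hy Hl IH]; simpl; [constructor|].
  destruct (Req_EM_T x y); auto. constructor; auto.
  intros Hin. apply in_remove in Hin. tauto.
Qed.

Lemma adm_replace n alpha b c : admissible n alpha -> In b alpha -> ~ In c alpha ->
  admissible n (c :: remove Req_EM_T b alpha).
Proof.
  intros [Hn [Hd Hl]] Hb Hc. split; [discriminate|]. split.
  - constructor; [|apply NoDup_remove'; auto].
    intros Hin. apply in_remove in Hin. tauto.
  - simpl. pose proof (remove_length_lt Req_EM_T alpha b Hb). lia.
Qed.

Lemma msd_replace_le alpha b c x : alpha <> [] -> In b alpha -> (x - c) ^ 2 <= (x - b) ^ 2 ->
  min_sqdist (c :: remove Req_EM_T b alpha) x <= min_sqdist alpha x.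
Proof.
  intros Hn Hb Hc. destruct (msd_eq alpha x Hn) as [a [Ha E]]. rewrite E.
  destruct (Req_EM_T a b) as [->|Hab].
  - eapply Rle_trans; [apply msd_le; left; reflexivity|exact Hc].
  - apply msd_le. right. apply in_in_remove; auto.
Qed.

Lemma msd_replace_lt alpha b c x : alpha <> [] ->
  (forall a, In a alpha -> (x - c) ^ 2 < (x - a) ^ 2) ->
  min_sqdist (c :: remove Req_EM_T b alpha) x < min_sqdist alpha x.
Proof.
  intros Hn H. destruct (msd_eq alpha x Hn) as [a [Ha E]]. rewrite E.
  eapply Rle_lt_trans; [apply msd_le; left; reflexivity|auto].
Qed.

Lemma V_beta0 : V [1/4; 3/4] <= 1/48.
Proof.
  unfold V.
  assert (A1 : RInt (min_sqdist [1/4; 3/4]) 0 (1/2) <= RInt (fun x => (x - 1/4) ^ 2) 0 (1/2)).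
  { apply RInt_le; [lra|apply ex_msd|apply ex_sq|]. intros; apply msd_le; simpl; auto. }
  assert (A2 : RInt (min_sqdist [1/4; 3/4]) (1/2) 1 <= RInt (fun x => (x - 3/4) ^ 2) (1/2) 1).
  { apply RInt_le; [lra|apply ex_msd|apply ex_sq|]. intros; apply msd_le; simpl; auto. }
  rewrite int_sq in A1. rewrite int_sq in A2. lra.
Qed.

Lemma adm_beta0 n : (2 <= n)%nat -> admissible n [1/4; 3/4].
Proof.
  intros Hn. split; [discriminate|]. split; [|simpl; lia].
  constructor; [|constructor; [intros []|constructor]].
  intros [H|[]]. lra.
Qed.

Theorem proposition4p3 (n : nat) (alpha : list R) :
  (2 <= n)%nat -> optimal_n_means n alpha ->
  (exists a, In a alpha /\ 0 <= a <= 1/2) /\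
  (exists a, In a alpha /\ 1/2 <= a <= 1).
Proof.
  intros Hn Hopt.
  assert (Hadm : admissible n alpha) by apply Hopt.
  assert (Hne : alpha <> []) by apply Hadm.
  pose proof (glb_le n alpha [1/4; 3/4] Hopt (adm_beta0 n Hn)) as H0.
  pose proof V_beta0 as H0'.
  split.
  - apply NNPP. intros H1.
    assert (Hout : forall a, In a alpha -> a < 0 \/ 1/2 < a).
    { intros a Ha. destruct (Rlt_dec a 0); [left; auto|].
      destruct (Rlt_dec (1/2) a); [right; auto|]. exfalso; apply H1. exists a; split; auto; lra. }
    destruct (classic (exists a0, In a0 alpha /\ a0 < 0)) as [[a0 [Ha0 Hneg]]|Hno].
    + set (beta := 0 :: remove Req_EM_T a0 alpha).
      assert (Hb : admissible n beta).
      { apply adm_replace; auto. intros Hin. destruct (Hout 0 Hin); lra. }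
      pose proof (glb_le n alpha beta Hopt Hb).
      assert (Hle : forall x, 0 <= x <= 1 -> min_sqdist beta x <= min_sqdist alpha x).
      { intros x Hx. apply msd_replace_le; auto. nra. }
      assert (RInt (min_sqdist beta) 0 (1/2) < RInt (min_sqdist alpha) 0 (1/2)).
      { apply (RInt_lt_piece _ _ 0 0 (1/4) (1/2)); try lra; try apply msd_cont.
        - intros; apply Hle; lra.
        - intros x Hx. apply msd_replace_lt; auto. intros a Ha.
          destruct (Hout a Ha); nra. }
      assert (RInt (min_sqdist beta) (1/2) 1 <= RInt (min_sqdist alpha) (1/2) 1).
      { apply RInt_le; try lra; try apply ex_msd. intros; apply Hle; lra. }
      unfold V in *. lra.
    + assert (Hpos : forall a, In a alpha -> 1/2 < a).
      { intros a Ha. destruct (Hout a Ha); auto. exfalso; apply Hno; eauto. }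
      assert (RInt (fun x => (x - 1/2) ^ 2) 0 (1/2) < RInt (min_sqdist alpha) 0 (1/2)).
      { apply RInt_lt; try lra; intros; try apply msd_cont; try apply cont_sq.
        destruct (msd_eq alpha x Hne) as [a [Ha E]]. rewrite E.
        specialize (Hpos a Ha). nra. }
      assert (0 <= RInt (min_sqdist alpha) (1/2) 1).
      { apply RInt_ge_0; try lra; try apply ex_msd. intros; apply msd_ge0. }
      rewrite int_sq in *. unfold V in *. lra.
  - apply NNPP. intros H1.
    assert (Hout : forall a, In a alpha -> a < 1/2 \/ 1 < a).
    { intros a Ha. destruct (Rlt_dec a (1/2)); [left; auto|].
      destruct (Rlt_dec 1 a); [right; auto|]. exfalso; apply H1. exists a; split; auto; lra. }
    destruct (classic (exists b0, In b0 alpha /\ 1 < b0)) as [[b0 [Hb0 Hbig]]|Hno].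
    + set (beta := 1 :: remove Req_EM_T b0 alpha).
      assert (Hb : admissible n beta).
      { apply adm_replace; auto. intros Hin. destruct (Hout 1 Hin); lra. }
      pose proof (glb_le n alpha beta Hopt Hb).
      assert (Hle : forall x, 0 <= x <= 1 -> min_sqdist beta x <= min_sqdist alpha x).
      { intros x Hx. apply msd_replace_le; auto. nra. }
      assert (RInt (min_sqdist beta) (1/2) 1 < RInt (min_sqdist alpha) (1/2) 1).
      { apply (RInt_lt_piece _ _ (1/2) (3/4) 1 1); try lra; try apply msd_cont.
        - intros; apply Hle; lra.
        - intros x Hx. apply msd_replace_lt; auto. intros a Ha.
          destruct (Hout a Ha); nra. }
      assert (RInt (min_sqdist beta) 0 (1/2) <= RInt (min_sqdist alpha) 0 (1/2)).
      { apply RInt_le; try lra; try apply ex_msd. intros; apply Hle; lra. }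
      unfold V in *. lra.
    + assert (Hpos : forall a, In a alpha -> a < 1/2).
      { intros a Ha. destruct (Hout a Ha); auto. exfalso; apply Hno; eauto. }
      assert (RInt (fun x => (x - 1/2) ^ 2) (1/2) 1 < RInt (min_sqdist alpha) (1/2) 1).
      { apply RInt_lt; try lra; intros; try apply msd_cont; try apply cont_sq.
        destruct (msd_eq alpha x Hne) as [a [Ha E]]. rewrite E.
        specialize (Hpos a Ha). nra. }
      assert (0 <= RInt (min_sqdist alpha) 0 (1/2)).
      { apply RInt_ge_0; try lra; try apply ex_msd. intros; apply msd_ge0. }
      rewrite int_sq in *. unfold V in *. lra.
Qed.
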